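(* Let $n\geqslant 3$ and let $G$ (gene tree) and $S$ (species tree) be caterpillar trees with leaves bijectively labeled by the same set of $n$ labels, not necessarily of the same labeled topology. Number the internal nodes of $G$ by $1,\dots,n-1$ from the cherry to the root. For $1\leqslant j\leqslant n-1$, let $L_j$ be the set of labels of the $j+1$ leaves descended from node $j$ in $G$, let $T_j(G,S)$ be the smallest subtree of $S$ (rooted at a node of $S$ and containing all its descendants) having every label of $L_j$ on one of its leaves, and let $d_j$ be the number of edges separating the root of $T_j(G,S)$ from the root of $S$. For $1\leqslant j\leqslant n-2$ put $c_j=d_j-d_{j+1}$. Then the number of coalescent histories for $(G,S)$ equals $$\sum_{k_1=1}^{1}\ \sum_{k_2=1}^{k_1+c_{n-2}}\ \sum_{k_3=1}^{k_2+c_{n-3}}\cdots\sum_{k_{n-1}=1}^{k_{n-2}+c_{1}} 1,$$ i.e. the summation over $k_m$ ($2\leqslant m\leqslant n-1$) runs from $1$ to $k_{m-1}+c_{n-m}$; in particular this number depends only on the vector $(c_1,\dots,c_{n-2})$, which is a function of the topologies of $G$ and $S$.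
   Context: All trees are binary, rooted, leaf-labeled. A caterpillar tree is one in which some internal node is descended from all other internal nodes; it has a unique cherry (internal node with exactly two descendant leaves). Internal edge $i$ of a caterpillar is the edge immediately above internal node $i$ (nodes numbered $1,\dots,n-1$ from cherry to root), with an extra edge $n-1$ above the root. A coalescent history for $(G,S)$ on the same label set is a map $h$ from internal nodes of $G$ to internal edges of $S$ (including the edge above the root) such that (1) every label of a leaf below node $v$ of $G$ labels a leaf of $S$ below edge $h(v)$, and (2) if $v_2$ is descended from $v_1$ in $G$ then $h(v_2)$ is descended from $h(v_1)$ in $S$ (nodes and edges count as descended from themselves). *)

(* Defs.v *)
From mathcomp Require Import all_boot all_order all_algebra all_fingroup.
Set Implicit Arguments. Unset Strict Implicit. Unset Printing Implicit Defensive.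

(* A caterpillar on n >= 2 leaves is encoded by a permutation s : 'S_n listing
   its leaf labels from the bottom: s 0, s 1 label the two cherry leaves, and
   for 2 <= j <= n-1 the leaf labelled s j is the leaf child of internal node j.
   Internal nodes are numbered 1..n-1 from the cherry (node 1) to the root
   (node n-1); internal node j has exactly the leaves s 0, ..., s j below it,
   and internal node i is descended from internal node j iff i <= j.
   Internal edge j of the species tree is the edge immediately above internal
   node j (edge n-1 is the extra edge above the root); the leaves below edge j
   are the leaves below node j, and edge i is descended from edge j iff i <= j. *)

Definition clade (n : nat) (s : 'S_n) (j : nat) : {set 'I_n} :=
  [set s k | k : 'I_n & (k <= j)%N].

Definition cat_desc (i j : nat) : bool := (i <= j)%N.

(* A coalescent history for (G,S): a map h from the internal nodes of G
   to the internal edges of S.  Both are indexed by v : 'I_n.-1, where v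
   stands for internal node (resp. edge) number v+1 (so numbers 1..n-1). *)
Definition is_history (n : nat) (g s : 'S_n) (h : {ffun 'I_n.-1 -> 'I_n.-1}) : bool :=
  [forall v : 'I_n.-1, clade g v.+1 \subset clade s (h v).+1] &&
  [forall v1 : 'I_n.-1, forall v2 : 'I_n.-1,
     cat_desc v2.+1 v1.+1 ==> cat_desc (h v2).+1 (h v1).+1].

Definition num_histories (n : nat) (g s : 'S_n) : nat :=
  #|[set h : {ffun 'I_n.-1 -> 'I_n.-1} | is_history g s h]|.

Definition Lset (n : nat) (g : 'S_n) (j : nat) : {set 'I_n} := clade g j.

(* root of T_j(G,S): the lowest internal node of S whose clade contains L_j
   (since |L_j| >= 2 this smallest subtree is rooted at an internal node). *)
Definition mrca_node (n : nat) (s : 'S_n) (L : {set 'I_n}) : nat :=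
  (find (fun i => L \subset clade s i) (iota 1 n.-1)).+1.

Definition dd (n : nat) (g s : 'S_n) (j : nat) : nat :=
  (n.-1 - mrca_node s (Lset g j))%N.

Definition cc (n : nat) (g s : 'S_n) (j : nat) : int :=
  (dd g s j)%:Z - (dd g s j.+1)%:Z.

(* nested cs k: with cs = [:: a_1; ...; a_r], this is
   sum_{k'_1=1}^{k + a_1} sum_{k'_2=1}^{k'_1 + a_2} ... sum_{k'_r=1}^{k'_{r-1}+a_r} 1 *)
Fixpoint nested (cs : seq int) (k : nat) : nat :=
  match cs with
  | [::] => 1%N
  | c :: cs' =>
      (\sum_(0 <= k' < k + absz c + 1 | (1 <= k')%N && (k'%:Z <= k%:Z + c)%R)
          nested cs' k')%N
  end.

(* Main.v *)
Require Import Defs.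
From mathcomp Require Import all_boot all_order all_algebra all_fingroup.
From mathcomp Require Import zify.
Set Implicit Arguments. Unset Strict Implicit. Unset Printing Implicit Defensive.
Import GRing.Theory Num.Theory.

Definition Fp (N : nat) (lbf : nat -> nat) (j H : nat) (f : {ffun 'I_j -> 'I_N}) : bool :=
  [forall i : 'I_j, (lbf i <= f i) && (f i <= H)] &&
  [forall i1 : 'I_j, forall i2 : 'I_j, (i2 <= i1) ==> (f i2 <= f i1)].

Definition FF (N : nat) (lbf : nat -> nat) (j H : nat) : nat :=
  #|[set f : {ffun 'I_j -> 'I_N} | Fp lbf H f]|.

Definition ext (N j : nat) (p : 'I_N * {ffun 'I_j -> 'I_N}) : {ffun 'I_j.+1 -> 'I_N} :=
  [ffun i => if unlift ord_max i is Some i' then p.2 i' else p.1].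

Definition unext (N j : nat) (f : {ffun 'I_j.+1 -> 'I_N}) : 'I_N * {ffun 'I_j -> 'I_N} :=
  (f ord_max, [ffun i => f (lift ord_max i)]).

Lemma ext_bij N j : bijective (@ext N j).
Proof.
exists (@unext N j).
- move=> [x f]; rewrite /unext /ext /= !ffunE unlift_none; congr pair.
  by apply/ffunP => i; rewrite !ffunE liftK.
- move=> f; apply/ffunP => i; rewrite /ext /unext ffunE /=.
  by case: unliftP => [i' ->|->]; rewrite ?ffunE.
Qed.

Lemma Fp_ext N lbf j H x f :
  Fp lbf H (@ext N j (x, f)) = (lbf j <= x <= H) && Fp lbf x f.
Proof.
have Emax : ext (x, f) ord_max = x by rewrite ffunE unlift_none.
have Elift : forall i, ext (x, f) (lift ord_max i) = f i by move=> i; rewrite ffunE liftK.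
apply/idP/idP.
- case/andP => /forallP B /forallP M.
  have := B ord_max; rewrite Emax /= => ->; rewrite /=.
  apply/andP; split.
  + apply/forallP => i; have := B (lift ord_max i); rewrite Elift lift_max => /andP[-> _] /=.
    have := M ord_max; move/forallP => /(_ (lift ord_max i)).
    by rewrite Emax Elift lift_max /= ltnW.
  + apply/forallP => i1; apply/forallP => i2; apply/implyP => le.
    have := M (lift ord_max i1); move/forallP => /(_ (lift ord_max i2)).
    by rewrite !Elift !lift_max le.
- case/andP => /andP[l1 l2] /andP[/forallP B /forallP M].
  apply/andP; split.
  + apply/forallP => i; case: (unliftP ord_max i) => [i' ->|->].
    * rewrite Elift lift_max; have /andP[-> h] := B i'; exact: leq_trans h l2.
    * by rewrite Emax l1 l2.
  + apply/forallP => i1; apply/forallP => i2; apply/implyP => le.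
    case: (unliftP ord_max i1) le => [i1' ->|->]; case: (unliftP ord_max i2) => [i2' ->|->];
      rewrite ?Elift ?Emax ?lift_max //= => le; idtac.
    all: try (by have := M i1'; move/forallP => /(_ i2'); rewrite le).
    * by move: le; rewrite leqNgt ltn_ord.
    * by have /andP[_ ->] := B i2'.
Qed.

Lemma FF_rec N lbf j H :
  FF N lbf j.+1 H = \sum_(x < N | (lbf j <= x) && (x <= H)) FF N lbf j x.
Proof.
rewrite /FF -sum1_card (reindex (@ext N j)) /=; last first.
  by apply: onW_bij; apply: ext_bij.
rewrite (eq_bigr (fun x : 'I_N => \sum_(f in [set f : {ffun 'I_j -> 'I_N} | Fp lbf x f]) 1)); last by move=> x _; rewrite sum1_card.
rewrite pair_big_dep /=; apply: eq_bigl => -[x f] /=.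
by rewrite !inE Fp_ext.
Qed.

Lemma FF0 N lbf H : FF N lbf 0 H = 1.
Proof.
rewrite /FF (_ : [set f | _] = setT) ?cardsT ?card_ffun ?card_ord //.
apply/setP => f; rewrite !inE; apply/andP; split; apply/forallP; case=> //.
Qed.

Lemma sum_window (f : nat -> nat) (P : pred nat) a M B :
  (forall x, P x = (a <= x < a + M)) -> a + M <= B ->
  \sum_(0 <= x < B | P x) f x = \sum_(0 <= t < M) f (a + t).
Proof.
move=> HP hB.
rewrite (@big_cat_nat _ _ _ a) //; last by apply: leq_trans hB; apply: leq_addr.
rewrite (@big_cat_nat _ _ _ (a + M) a B) ?leq_addr //=.
rewrite [X in X + _]big_nat_cond [X in X + _]big1 ?add0n; last first.
  by move=> x /andP[/andP[_ xa]]; rewrite HP; lia.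
rewrite [X in _ + X]big_nat_cond [X in _ + X]big1 ?addn0; last first.
  by move=> x /andP[/andP[xa _]]; rewrite HP; lia.
rewrite -{1}(add0n a) big_addn addKn big_nat_cond [RHS]big_nat_cond.
apply: eq_big => [x|x _]; last by rewrite addnC.
by rewrite HP; apply/idP/idP => /andP[/andP[]]; lia.
Qed.

Lemma find_mono (P : pred nat) N :
  (forall i j, i <= j -> P i -> P j) -> P N -> 0 < N ->
  (find P (iota 1 N) < N) /\ forall e, e < N -> P e.+1 = (find P (iota 1 N) <= e).
Proof.
move=> mono PN N0.
have hP : has P (iota 1 N) by apply/hasP; exists N => //; rewrite mem_iota; lia.
have fN : find P (iota 1 N) < N by move: hP; rewrite has_find size_iota.
split=> // e eN.
have := nth_find 0 hP; rewrite nth_iota // => Pf.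
apply/idP/idP => [Pe|le].
  rewrite leqNgt; apply/negP => lt; have := before_find 0 lt.
  by rewrite nth_iota // add1n Pe.
by apply: mono _ _ _ Pf; lia.
Qed.

Lemma clade_mono n (s : 'S_n) i j : i <= j -> clade s i \subset clade s j.
Proof.
move=> ij; apply/subsetP => x /imsetP[k]; rewrite inE => ki ->.
by apply/imsetP; exists k => //; rewrite inE; apply: leq_trans ki ij.
Qed.

Lemma clade_full n (s : 'S_n) j : n.-1 <= j -> clade s j = setT.
Proof.
move=> nj; apply/setP => x; rewrite inE; apply/imsetP; exists (perm_inv s x).
  by rewrite inE; apply: leq_trans nj; have := ltn_ord (perm_inv s x); lia.
by rewrite permKV.
Qed.

Definition lbn n (g s : 'S_n) (i : nat) : nat :=
  find (fun e => clade g i.+1 \subset clade s e) (iota 1 n.-1).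

Lemma lbn_spec n (g s : 'S_n) i : 2 <= n ->
  lbn g s i < n.-1 /\
  forall e, e < n.-1 -> (clade g i.+1 \subset clade s e.+1) = (lbn g s i <= e).
Proof.
move=> n2; apply: find_mono; last by lia.
- by move=> a b ab /subset_trans; apply; apply: clade_mono.
- by rewrite /= (clade_full s (leqnn _)) subsetT.
Qed.

Lemma cc_lbn n (g s : 'S_n) j : 2 <= n ->
  cc g s j.+1 = ((lbn g s j.+1)%:Z - (lbn g s j)%:Z)%R.
Proof.
move=> n2; rewrite /cc /dd.
change (mrca_node s (Lset g j.+1)) with (lbn g s j).+1.
change (mrca_node s (Lset g j.+2)) with (lbn g s j.+1).+1.
have [h1 _] := lbn_spec g s j n2; have [h2 _] := lbn_spec g s j.+1 n2.
rewrite !subnS.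
have H : ((n.-1 - lbn g s j).-1 + lbn g s j = (n.-1 - lbn g s j.+1).-1 + lbn g s j.+1)%N by lia.
move: H; move: (lbn g s j) (lbn g s j.+1) ((n.-1 - lbn g s j).-1) ((n.-1 - lbn g s j.+1).-1) => a b x y H.
apply/eqP; rewrite subr_eq -addrA (addrC _ (Posz y)) addrA -!PoszD addnC -H PoszD addrK; exact/eqP.
Qed.


Lemma lbn_last n (g s : 'S_n) : 2 <= n -> lbn g s n.-2 = n.-2.
Proof.
move=> n2; have [h1 h2] := lbn_spec g s n.-2 n2.
have E : n.-2.+1 = n.-1 by lia.
apply/eqP; rewrite eqn_leq; apply/andP; split; first by lia.
case: (ltnP (lbn g s n.-2) n.-2) => // lt.
have L1 : n.-2.-1 < n.-1 by lia.
have L2 : lbn g s n.-2 <= n.-2.-1 by lia.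
have := h2 _ L1; rewrite L2 E.
have nlt : n.-1 < n by lia.
rewrite (clade_full g (leqnn _)) => /subsetP /(_ (s (Ordinal nlt))).
rewrite inE => /(_ isT) /imsetP[k]; rewrite inE => kle /perm_inj ek.
by move: kle; rewrite -ek /=; lia.
Qed.

Lemma map_iota_shift (T : Type) (F : nat -> T) j :
  [seq F (j.+1 - i) | i <- iota 0 j.+1] = F j.+1 :: [seq F (j - i) | i <- iota 0 j].
Proof.
rewrite /= subn0 -[1]addn0 iotaDl -map_comp; congr (_ :: _); apply: eq_map => i /=; rewrite add0n subSS.
Qed.

Lemma nested_FF n (g s : 'S_n) j : 2 <= n -> forall k, 1 <= k -> j < n.-1 ->
  lbn g s j + k <= n.-1 ->
  nested [seq cc g s (j - i) | i <- iota 0 j] k = FF n.-1 (lbn g s) j (lbn g s j + k.-1).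
Proof.
move=> n2; elim: j => [|j IH] k k1 jn hk; first by rewrite FF0.
rewrite map_iota_shift /= cc_lbn // FF_rec.
have [ha _] := lbn_spec g s j n2.
move: IH ha hk; move: (lbn g s j) (lbn g s j.+1) => a b IH ha hk.
rewrite (@sum_window _ _ 1 (b + k - a)); first last.
- by lia.
- move=> x; apply/idP/idP => /andP[x1 x2]; apply/andP; split => //; lia.
rewrite -(big_mkord (fun x => (a <= x) && (x <= b + k.-1)) (fun x => FF n.-1 (lbn g s) j x)).
rewrite [RHS](@sum_window _ _ a (b + k - a)); first last.
- by lia.
- by move=> x; apply/idP/idP => /andP[x1 x2]; apply/andP; split; lia.
apply: eq_big_nat => t /andP[_ tM]; rewrite IH //; try lia.
Qed.

Theorem proposition4 (n : nat) (g s : 'S_n) :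
  (3 <= n)%N ->
  num_histories g s =
  (\sum_(1 <= k1 < 2) nested [seq cc g s (n.-2 - i) | i <- iota 0 n.-2] k1)%N.
Proof.
move=> n3; have n2 : 2 <= n by lia.
have -> : num_histories g s = FF n.-1 (lbn g s) n.-1 n.-2.
  apply: eq_card => h; rewrite !inE /is_history /Fp; congr andb.
  apply/forallP/forallP => H v; have [_ hs] := lbn_spec g s v n2; have := H v.
    rewrite hs // => ->; have := ltn_ord (h v); rewrite /=; lia.
  by case/andP; rewrite hs.
rewrite big_nat1 nested_FF //; try lia; last by rewrite lbn_last //; lia.
rewrite lbn_last // addn0.
have -> : n.-1 = n.-2.+1 by lia.
rewrite FF_rec -(big_mkord (fun x => (lbn g s n.-2 <= x) && (x <= n.-2)) (fun x => FF n.-2.+1 (lbn g s) n.-2 x)).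
rewrite (@sum_window _ _ n.-2 1); first last.
- by lia.
- by move=> x; rewrite lbn_last //; apply/idP/idP => /andP[x1 x2]; apply/andP; split; lia.
by rewrite big_nat1 addn0.
Qed.
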